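(* Let $K$ be a field of characteristic $0$ and let $K[x,y]$ be the polynomial algebra in two variables over $K$. Consider the following bijections of the set $K[x,y]\times K[x,y]$ of pairs of polynomials: (E1) for $a\in K^{\ast}$ and an integer $k\ge 2$, the map $(u,v)\mapsto (u+a\,v^k,\ v)$; (E2) for $a\in K^{\ast}$ and an integer $k\ge 2$, the map $(u,v)\mapsto (u,\ v+a\,u^k)$. Let $A$ be the group (under composition) generated by all transformations of type (E1), let $B$ be the group generated by all transformations of type (E2), and let $G$ be the group generated by all transformations of types (E1) and (E2) together. Then $G$ is the free product of its subgroups $A$ and $B$, i.e. the homomorphism $A\ast B\to G$ induced by the inclusions $A\hookrightarrow G$ and $B\hookrightarrow G$ is an isomorphism. (The subgroups $A$ and $B$ are abelian.)
   Context: Via the action on the pair $(x,y)$, transformations of pairs of polynomials correspond to (tuples of images under) automorphisms of $K[x,y]$; the groups $A$, $B$, $G$ are groups of permutations of $K[x,y]\times K[x,y]$ under composition. *)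

(* Defs.v *)
From HB Require Import structures.
From mathcomp Require Import all_boot all_algebra.
From mathcomp Require Export mpoly.
Set Implicit Arguments. Unset Strict Implicit. Unset Printing Implicit Defensive.
Import GRing.Theory.
Local Open Scope ring_scope.

(* Pairs of polynomials in K[x,y] (x = 'X_0, y = 'X_1). *)
Definition pairK (K : fieldType) := ({mpoly K[2]} * {mpoly K[2]})%type.

Definition E1 (K : fieldType) (a : K) (k : nat) : pairK K -> pairK K :=
  fun uv => (uv.1 + a *: uv.2 ^+ k, uv.2).
Definition E2 (K : fieldType) (a : K) (k : nat) : pairK K -> pairK K :=
  fun uv => (uv.1, uv.2 + a *: uv.1 ^+ k).

Definition isE1 (K : fieldType) (f : pairK K -> pairK K) : Prop :=
  exists a k, a != 0 /\ (2 <= k)%N /\ f = E1 a k.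
Definition isE2 (K : fieldType) (f : pairK K -> pairK K) : Prop :=
  exists a k, a != 0 /\ (2 <= k)%N /\ f = E2 a k.

Inductive gen_group (T : Type) (S : (T -> T) -> Prop) : (T -> T) -> Prop :=
| gg_gen f : S f -> gen_group S f
| gg_id : gen_group S id
| gg_comp f g : gen_group S f -> gen_group S g -> gen_group S (f \o g)
| gg_inv f g : gen_group S f -> cancel f g -> cancel g f -> gen_group S g
| gg_ext f g : gen_group S f -> f =1 g -> gen_group S g.

Definition groupA (K : fieldType) := gen_group (@isE1 K).
Definition groupB (K : fieldType) := gen_group (@isE2 K).
Definition groupG (K : fieldType) :=
  gen_group (fun f => @isE1 K f \/ @isE2 K f).

(* Elements of the free product A * B, as reduced words:
   letters tagged true come from A, false from B; no letter is the identity,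
   and consecutive letters come from different factors. *)
Definition reduced_word (K : fieldType) (w : seq (bool * (pairK K -> pairK K))) : Prop :=
  foldr (fun x P =>
           ((if x.1 then groupA x.2 else groupB x.2) /\ ~ (x.2 =1 id)) /\ P)
        True w /\
  sorted (fun b c : bool => b != c) (map fst w).

(* The canonical map A * B -> G : product of the letters (composition). *)
Definition eval_word (K : fieldType) (w : seq (bool * (pairK K -> pairK K))) :
  pairK K -> pairK K := foldr (fun x acc => x.2 \o acc) id w.

(* Main.v *)
Require Import Defs.
From HB Require Import structures.
From mathcomp Require Import all_boot all_algebra.
From mathcomp Require Import mpoly.
From Stdlib Require Import Classical FunctionalExtensionality.
Set Implicit Arguments. Unset Strict Implicit. Unset Printing Implicit Defensive.
Import GRing.Theory.
Local Open Scope ring_scope.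

Section S.
Variable K : fieldType.
Implicit Types (P Q : {poly K}).

Definition peval P (v : {mpoly K[2]}) := (map_poly (@mpolyC 2 K) P).[v].
Definition TL (b : bool) P : pairK K -> pairK K :=
  if b then fun uv => (uv.1 + peval P uv.2, uv.2)
  else fun uv => (uv.1, uv.2 + peval P uv.1).
Definition good P := P`_0 = 0 /\ P`_1 = 0.
Definition groupL (b : bool) f := if b then @groupA K f else @groupB K f.

Lemma pevalD P Q v : peval (P + Q) v = peval P v + peval Q v.
Proof. by rewrite /peval rmorphD hornerD. Qed.
Lemma pevalN P v : peval (- P) v = - peval P v.
Proof. by rewrite /peval rmorphN hornerN. Qed.
Lemma peval0 v : peval 0 v = 0.
Proof. by rewrite /peval rmorph0 horner0. Qed.
Lemma pevalE a k v : peval (a *: 'X^k) v = a *: v ^+ k.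
Proof. by rewrite /peval map_polyZ map_polyXn hornerZ hornerXn mul_mpolyC. Qed.

Notation phi := (mmap (@polyC K) (fun _ : 'I_2 => 'X)).
Lemma phiD x y : phi (x + y) = phi x + phi y.
Proof. exact: mmapD. Qed.
Lemma phi_peval P v : phi (peval P v) = P \Po phi v.
Proof.
rewrite /peval /comp_poly -[LHS](horner_map phi) -map_poly_comp; congr (_.[_]).
apply: eq_map_poly => c /=; exact: mmapC.
Qed.
Lemma phiX i : phi 'X_i = 'X.
Proof. by rewrite mmapX mmap1U. Qed.
From mathcomp Require Import zify.

Lemma charL b f : groupL b f -> exists P, good P /\ f =1 TL b P.
Proof.
case: b => /=.
- elim => {f}.
  + move=> f [a [k [a0 [k2 ->]]]]; exists (a *: 'X^k); split.
      rewrite /good !coefZ !coefXn; case: k k2 => [|[|k]] //= _; by rewrite !mulr0.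
    by case=> u v /=; rewrite /E1 pevalE.
  + exists 0; split; first by rewrite /good !coef0.
    by case=> u v /=; rewrite peval0 addr0.
  + move=> f g _ [P [[P0 P1] eP]] _ [Q [[Q0 Q1] eQ]]; exists (P + Q); split.
      by rewrite /good !coefD P0 P1 Q0 Q1 addr0.
    case=> u v /=; rewrite eQ eP /= pevalD; congr (_, _).
    by rewrite [peval P v + _]addrC addrA.
  + move=> f g _ [P [[P0 P1] eP]] fg gf; exists (- P); split.
      by rewrite /good !coefN P0 P1 oppr0.
    move=> uv; rewrite -[in LHS](_ : f (TL true (- P) uv) = uv) ?fg //.
    by rewrite eP; case: uv => u v /=; rewrite pevalN subrK.
  + by move=> f g _ [P [gP eP]] fg; exists P; split=> // x; rewrite -fg.
- elim => {f}.
  + move=> f [a [k [a0 [k2 ->]]]]; exists (a *: 'X^k); split.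
      rewrite /good !coefZ !coefXn; case: k k2 => [|[|k]] //= _; by rewrite !mulr0.
    by case=> u v /=; rewrite /E2 pevalE.
  + exists 0; split; first by rewrite /good !coef0.
    by case=> u v /=; rewrite peval0 addr0.
  + move=> f g _ [P [[P0 P1] eP]] _ [Q [[Q0 Q1] eQ]]; exists (P + Q); split.
      by rewrite /good !coefD P0 P1 Q0 Q1 addr0.
    case=> u v /=; rewrite eQ eP /= pevalD; congr (_, _).
    by rewrite [peval P u + _]addrC addrA.
  + move=> f g _ [P [[P0 P1] eP]] fg gf; exists (- P); split.
      by rewrite /good !coefN P0 P1 oppr0.
    move=> uv; rewrite -[in LHS](_ : f (TL false (- P) uv) = uv) ?fg //.
    by rewrite eP; case: uv => u v /=; rewrite pevalN subrK.
  + by move=> f g _ [P [gP eP]] fg; exists P; split=> // x; rewrite -fg.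
Qed.

Lemma invL b f : groupL b f -> exists g, groupL b g /\ cancel f g /\ cancel g f.
Proof.
move=> gf; have [P [_ eP]] := charL gf.
have c1 : cancel f (TL b (- P)).
  by move=> x; rewrite eP; case: b {gf eP} => /=; case: x => u v /=; rewrite pevalN addrK.
have c2 : cancel (TL b (- P)) f.
  by move=> x; rewrite eP; case: b {gf eP c1} => /=; case: x => u v /=; rewrite pevalN subrK.
exists (TL b (- P)); split=> //.
by move: eP; case: b gf c1 c2 => /= gf c1 c2 _; apply: (gg_inv gf).
Qed.

Lemma nonid_size b f P : good P -> f =1 TL b P -> ~ f =1 id -> (3 <= size P)%N.
Proof.
move=> [P0 P1] eP nid; rewrite leqNgt; apply/negP => sP.
have P00 : P = 0.
  apply/polyP => i; rewrite coef0; case: i => [|[|i]] //.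
  by rewrite nth_default //; apply: leq_trans (_ : 2 <= _)%N; rewrite // -ltnS.
apply: nid => x; rewrite eP P00; case: b {eP}; case: x => u v /=; by rewrite peval0 addr0.
Qed.

Lemma eval_cons (x : bool * (pairK K -> pairK K)) w :
  eval_word (x :: w) =1 x.2 \o eval_word w.
Proof. by []. Qed.

Lemma reduced_nil : reduced_word (K := K) [::].
Proof. by []. Qed.

Lemma reduced_cons b h w : reduced_word ((b, h) :: w) <->
  (groupL b h /\ ~ h =1 id) /\ reduced_word w /\
  (forall c, ohead (map fst w) = Some c -> b != c).
Proof.
rewrite /reduced_word /=; case: w => [|c w] /=.
  split.
    move=> [[[g n] _] _]; split; first exact: (conj g n).
    by split; [split|].
  by move=> [gn _]; split; [split|].
split.
  move=> [[[g n] lcfo] /andP[bc pa]]; split; first exact: (conj g n).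
  by split; [split|move=> d [<-]].
move=> [gn [[lcfo pa] hd]]; split; first by split.
by rewrite hd.
Qed.

Definition t0 : pairK K := ('X_(@ord0 1), 'X_(@ord0 1)).
Definition sz (m : {mpoly K[2]}) := size (phi m).

Lemma size_comp_ge P (q : {poly K}) : (3 <= size P)%N -> (2 <= size q)%N ->
  size (P \Po q) = ((size P).-1 * (size q).-1).+1.
Proof.
move=> h3 h2; have := size_comp_poly P q.
case: (size (P \Po q)) => [|n] /= h; last by rewrite h.
move: h3 h2 h; case: (size P) => [|[|[|a]]] //; case: (size q) => [|[|c]] //= _ _; nia.
Qed.

Definition htag (w : seq (bool * (pairK K -> pairK K))) := ohead (map fst w).

Definition inv_ok (o : option bool) (p : pairK K) :=
  match o with
  | None => (sz p.1 == 2%N) && (sz p.2 == 2%N)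
  | Some true => (2 <= sz p.2 < sz p.1)%N
  | Some false => (2 <= sz p.1 < sz p.2)%N
  end.

Lemma numL p d : (3 <= p)%N -> (2 <= d)%N -> (d < ((p.-1) * d.-1).+1)%N.
Proof. case: p => [|[|[|p]]] //; case: d => [|[|d]] //= _ _; nia. Qed.

Lemma sz_step P (u v : {mpoly K[2]}) : (3 <= size P)%N -> (2 <= sz v)%N ->
  (sz u < ((size P).-1 * (sz v).-1).+1)%N ->
  sz (u + peval P v) = ((size P).-1 * (sz v).-1).+1.
Proof.
move=> h3 h2 h; rewrite /sz phiD phi_peval addrC size_addl ?size_comp_ge //.
Qed.

Lemma step b P u v o : (3 <= size P)%N -> (forall c, o = Some c -> b != c) ->
  inv_ok o (u, v) -> inv_ok (Some b) (TL b P (u, v)).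
Proof.
move=> h3 hc; case: b hc => hc /=.
- have {}hc : o <> Some true by move/hc.
  have H : forall a d, (a <= d)%N -> (2 <= d)%N -> (2 <= d < ((size P).-1 * d.-1).+1)%N /\ (a < ((size P).-1 * d.-1).+1)%N.
    move=> a d ad d2; case: (size P) h3 => [|[|[|p]]] // _; case: d ad d2 => [|[|d]] //= ad _; split; nia.
  case: o hc => [[]|] //= hc.
    move=> /andP[h2 h1]; have [H1 H2] := H (sz u) (sz v) (ltnW h1) (leq_trans h2 (ltnW h1)).
    by rewrite sz_step // (leq_trans h2 (ltnW h1)).
  move=> /andP[/eqP h1 /eqP h2]; have [H1 H2] := H 2%N 2%N (leqnn 2) (leqnn 2).
  by rewrite sz_step ?h1 ?h2.
- have {}hc : o <> Some false by move/hc.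
  have H : forall a d, (a <= d)%N -> (2 <= d)%N -> (2 <= d < ((size P).-1 * d.-1).+1)%N /\ (a < ((size P).-1 * d.-1).+1)%N.
    move=> a d ad d2; case: (size P) h3 => [|[|[|p]]] // _; case: d ad d2 => [|[|d]] //= ad _; split; nia.
  case: o hc => [[]|] //= hc.
    move=> /andP[h2 h1]; have [H1 H2] := H (sz v) (sz u) (ltnW h1) (leq_trans h2 (ltnW h1)).
    by rewrite sz_step // (leq_trans h2 (ltnW h1)).
  move=> /andP[/eqP h1 /eqP h2]; have [H1 H2] := H 2%N 2%N (leqnn 2) (leqnn 2).
  by rewrite sz_step ?h1 ?h2.
Qed.

Lemma pingpong w : reduced_word w -> inv_ok (htag w) (eval_word w t0).
Proof.
elim: w => [|[b h] w IH].
  by move=> _; rewrite /= /sz phiX size_polyX.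
move/reduced_cons => [[gh nh] [rw hw]]; have := IH rw.
have [P [gP eP]] := charL gh; have s3 := nonid_size gP eP nh.
rewrite eval_cons /= eP; move: (eval_word w t0) => [u v].
exact: step.
Qed.

Lemma htag_eq (w1 w2 : seq (bool * (pairK K -> pairK K))) : reduced_word w1 -> reduced_word w2 ->
  eval_word w1 =1 eval_word w2 -> htag w1 = htag w2.
Proof.
move=> r1 r2 E; have := pingpong r1; have := pingpong r2; rewrite (E t0).
move: (eval_word w2 t0) => [u v] /=.
case: (htag w1) => [[]|]; case: (htag w2) => [[]|] //=; lia.
Qed.

Lemma lmul b h (w : seq (bool * (pairK K -> pairK K))) : groupL b h -> reduced_word w ->
  exists w', reduced_word w' /\ eval_word w' =1 h \o eval_word w.
Proof.
move=> gh rw; case: (classic (h =1 id)) => [hid|nid].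
  by exists w; split=> // x /=; rewrite hid.
case: w rw => [|[c y] w] rw.
  exists [:: (b, h)]; split; last by move=> x.
  by apply/reduced_cons; split=> //; split.
move/reduced_cons: (rw) => [[gy ny] [rw' hw]].
case: (eqVneq b c) => [e|bc]; first subst c.
  have gz : groupL b (h \o y).
    by case: b gh gy {hw rw} => /= gh gy; apply: gg_comp.
  case: (classic ((h \o y) =1 id)) => [zid|znid].
    by exists w; split=> // x; symmetry; exact: zid.
  exists ((b, h \o y) :: w); split; last by move=> x.
  by apply/reduced_cons; split.
exists ((b, h) :: (c, y) :: w); split; last by move=> x.
apply/reduced_cons; split=> //; split=> // d [<-]; exact: bc.
Qed.

Lemma concat (w1 w2 : seq (bool * (pairK K -> pairK K))) : reduced_word w1 -> reduced_word w2 ->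
  exists w, reduced_word w /\ eval_word w =1 eval_word w1 \o eval_word w2.
Proof.
elim: w1 => [|[b h] w1 IH] r1 r2; first by exists w2; split.
move/reduced_cons: r1 => [[gh _] [r1' _]].
have [w [rw ew]] := IH r1' r2; have [w' [rw' ew']] := lmul gh rw.
by exists w'; split=> // x; rewrite ew' /= ew.
Qed.

Lemma linv (w : seq (bool * (pairK K -> pairK K))) : reduced_word w ->
  exists w', reduced_word w' /\ forall x, eval_word w' (eval_word w x) = x.
Proof.
elim: w => [|[b h] w IH] r; first by exists [::]; split.
move/reduced_cons: r => [[gh nh] [r' _]].
have [w1 [rw1 e1]] := IH r'; have [g [gg [hg gh']]] := invL gh.
have [w2 [rw2 e2]] := lmul gg reduced_nil.
have [w3 [rw3 e3]] := concat rw1 rw2.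
by exists w3; split=> // x; rewrite e3 /= e2 /= hg e1.
Qed.

End S.

Unset Implicit Arguments.
Theorem lemma3p2 (K : fieldType) (charK0 : [pchar K] =i pred0) :
  (* A and B are abelian *)
  (forall f g, @groupA K f -> @groupA K g -> f \o g =1 g \o f) /\
  (forall f g, @groupB K f -> @groupB K g -> f \o g =1 g \o f) /\
  (* A * B -> G is surjective *)
  (forall f, @groupG K f -> exists w, reduced_word w /\ eval_word w =1 f) /\
  (* A * B -> G is injective *)
  (forall w1 w2, @reduced_word K w1 -> @reduced_word K w2 ->
     eval_word w1 =1 eval_word w2 -> w1 = w2).
Proof.
split.
  move=> f g gf gg x.
  have [P [_ eP]] := charL (b := true) gf; have [Q [_ eQ]] := charL (b := true) gg.
  rewrite /= !eP !eQ; case: x => u v /=; congr (_, _); exact: addrAC.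
split.
  move=> f g gf gg x.
  have [P [_ eP]] := charL (b := false) gf; have [Q [_ eQ]] := charL (b := false) gg.
  rewrite /= !eP !eQ; case: x => u v /=; congr (_, _); exact: addrAC.
split.
  move=> f; elim => {f}.
  - move=> f [E|E].
      have gf : groupL true f := gg_gen E.
      by have [w [rw ew]] := lmul gf (reduced_nil K); exists w; split=> // x; rewrite ew.
    have gf : groupL false f := gg_gen E.
    by have [w [rw ew]] := lmul gf (reduced_nil K); exists w; split=> // x; rewrite ew.
  - by exists [::].
  - move=> f g _ [w1 [r1 e1]] _ [w2 [r2 e2]]; have [w [r e]] := concat r1 r2.
    by exists w; split=> // x; rewrite e /= e2 e1.
  - move=> f g _ [w [r e]] fg gf; have [w' [r' e']] := linv r.
    by exists w'; split=> // x; rewrite -[in LHS](gf x) -e e'.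
  - by move=> f g _ [w [r e]] fg; exists w; split=> // x; rewrite e fg.
move=> w1; elim: w1 => [|[b h] w1 IH] w2 r1 r2 E.
  by have := htag_eq r1 r2 E; case: w2 {E r2}.
have := htag_eq r1 r2 E; case: w2 r2 E => [|[c y] w2] //= r2 E [bc]; subst c.
move/reduced_cons: (r1) => [[gh nh] [r1' hw1]].
move/reduced_cons: (r2) => [[gy ny] [r2' hw2]].
have [g [gg [hg gh']]] := invL gh.
have gz : groupL b (g \o y) by case: b gg gy {E r1 r2 hw1 hw2 gh nh} => /= gg gy; apply: gg_comp.
have E' : eval_word w1 =1 (g \o y) \o eval_word w2.
  by move=> x; have Ex := E x; rewrite /= in Ex; rewrite /= -Ex hg.
case: (classic ((g \o y) =1 id)) => [zid|znid].
  have e12 : eval_word w1 =1 eval_word w2 by move=> x; rewrite E'; exact: zid.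
  have -> := IH w2 r1' r2' e12.
  have hy : h = y.
    apply: functional_extensionality => x; have gyx := zid x; rewrite /= in gyx.
    by rewrite -[in LHS]gyx gh'.
  by rewrite hy.
exfalso.
have r3 : reduced_word ((b, g \o y) :: w2) by apply/reduced_cons.
have := htag_eq r1' r3 E'; rewrite /htag /= => H.
by move: (hw1 b H); rewrite eqxx.
Qed.
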